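(* Assume $\bar\Phi_p=0$, $\Phi_p^\top\Phi_p=\mathrm{diag}(\sigma_1^2,\dots,\sigma_d^2)$ with all $\sigma_j^2>0$, and $\delta>0$. Let $\hat w^\delta_{\ell_\infty}$ be the $\ell_\infty$ balancing weights, $\tfrac1n\hat w^\delta_{\ell_\infty}=\mathcal T_\delta(\bar\Phi_q-\bar\Phi_p)(\Phi_p^\top\Phi_p)^{-1}\Phi_p^\top$. Then for every $\hat\beta_{\mathrm{reg}}\in\mathbb{R}^d$, $$\bar\Phi_q\hat\beta_{\mathrm{reg}}+\tfrac1n\hat w^\delta_{\ell_\infty}(Y_p-\Phi_p\hat\beta_{\mathrm{reg}})=\bar\Phi_q\hat\beta_{\ell_\infty},$$ where, with $\Delta_j:=\bar\Phi_{q,j}-\bar\Phi_{p,j}$, $$\hat\beta_{\ell_\infty,j}=\begin{cases}\hat\beta_{\mathrm{reg},j}&\text{if }|\Delta_j|<\delta,\\[2pt] \left|\frac{\delta}{\Delta_j}\right|\hat\beta_{\mathrm{reg},j}+\left(1-\left|\frac{\delta}{\Delta_j}\right|\right)\hat\beta_{\mathrm{ols},j}&\text{otherwise.}\end{cases}$$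
   Context: $\Phi_p\in\mathbb{R}^{n\times d}$ (source features), $Y_p\in\mathbb{R}^n$, $\Phi_q\in\mathbb{R}^{n\times d}$ (target features), column averages $\bar\Phi_p,\bar\Phi_q\in\mathbb{R}^{1\times d}$. $\hat\beta_{\mathrm{ols}}:=(\Phi_p^\top\Phi_p)^{-1}\Phi_p^\top Y_p$. $\mathcal T_t$ is entrywise soft-thresholding: $\mathcal T_t(z)=0$ if $|z|\le t$, $z-t$ if $z>t$, $z+t$ if $z<-t$. These weights solve $\min\|v\|_2^2$ s.t. $\|v\Phi_p-\bar\Phi_q\|_\infty\le\delta$ over $v=\tfrac1n w$. *)

(* Defs.v *)
From HB Require Import structures.
From mathcomp Require Import all_boot all_order all_algebra.
Set Implicit Arguments. Unset Strict Implicit. Unset Printing Implicit Defensive.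
Import Order.TTheory GRing.Theory Num.Theory.
Local Open Scope ring_scope.

Definition colavg (R : realFieldType) (n d : nat) (Phi : 'M[R]_(n, d)) : 'rV[R]_d :=
  (n%:R)^-1 *: (const_mx 1 *m Phi).

Definition soft_thr (R : realFieldType) (t z : R) : R :=
  if `|z| <= t then 0 else if z > t then z - t else z + t.

Definition soft_thr_row (R : realFieldType) (d : nat) (t : R) (z : 'rV[R]_d) : 'rV[R]_d :=
  \row_j soft_thr t (z 0 j).

Definition beta_ols (R : realFieldType) (n d : nat) (Phip : 'M[R]_(n, d))
  (Yp : 'cV[R]_n) : 'cV[R]_d :=
  invmx (Phip^T *m Phip) *m Phip^T *m Yp.

(* the l_infty balancing weights w (so that (1/n) w = T_delta(...) (Phi_p^T Phi_p)^{-1} Phi_p^T) *)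
Definition w_linf (R : realFieldType) (n d : nat) (delta : R)
  (Phip Phiq : 'M[R]_(n, d)) : 'rV[R]_n :=
  n%:R *: (soft_thr_row delta (colavg Phiq - colavg Phip)
           *m invmx (Phip^T *m Phip) *m Phip^T).

Definition beta_linf (R : realFieldType) (n d : nat) (delta : R)
  (Phip Phiq : 'M[R]_(n, d)) (Yp : 'cV[R]_n) (breg : 'cV[R]_d) : 'cV[R]_d :=
  let Delta := colavg Phiq - colavg Phip in
  let bols := beta_ols Phip Yp in
  \col_j (if `|Delta 0 j| < delta then breg j 0
          else `|delta / Delta 0 j| * breg j 0
               + (1 - `|delta / Delta 0 j|) * bols j 0).

(* Main.v *)
From HB Require Import structures.
From mathcomp Require Import all_boot all_order all_algebra ring lra.
Require Import Defs.
Import Order.TTheory GRing.Theory Num.Theory.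
Local Open Scope ring_scope.

Lemma pointwise (R : realFieldType) (delta q b o : R) : 0 < delta ->
  q * b + soft_thr delta q * o - soft_thr delta q * b =
  q * (if `|q| < delta then b else `|delta / q| * b + (1 - `|delta / q|) * o).
Proof.
move=> hd; rewrite /soft_thr normf_div (gtr0_norm hd).
have [q0|q0|->] := ltrgt0P q; last first.
  by rewrite (ltW hd) !mul0r subr0 addr0.
- idtac.
  have [h1|h1] := ltP (- q) delta.
    by rewrite (ltW h1) !mul0r addr0 subr0.
  rewrite ?(le_gtF h1) /=.
  have qd : (delta < q) = false by apply/negbTE; rewrite -leNgt; apply/ltW/(lt_trans q0 hd).
  rewrite qd.
  have [h2|h2] := leP (- q) delta.
    have qe : q = - delta by apply/eqP; rewrite -eqr_oppLR eq_le h1 h2.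
    rewrite qe opprK divff ?gt_eqF // subrr; ring.
  by field; rewrite ?oppr_eq0 lt_eqF.
- idtac.
  have [h1|h1] := ltP q delta.
    by rewrite (ltW h1) !mul0r addr0 subr0.
  rewrite ?(le_gtF h1) /=.
  have [h2|h2] := leP q delta.
    have qd : q = delta by apply/le_anti; rewrite h1 h2.
    rewrite qd divff ?gt_eqF // subrr; ring.
  rewrite ?h2 ?(ltW h2) /=.
  by field; rewrite gt_eqF.
Qed.

Theorem mainTheorem7 (R : realFieldType) (n d : nat)
  (Phip Phiq : 'M[R]_(n, d)) (Yp : 'cV[R]_n) (delta : R) (sigma2 : 'rV[R]_d)
  (hbarp : colavg Phip = 0)
  (hdiag : Phip^T *m Phip = diag_mx sigma2)
  (hpos : forall j, 0 < sigma2 0 j)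
  (hdelta : 0 < delta) :
  forall breg : 'cV[R]_d,
    colavg Phiq *m breg
      + (n%:R)^-1 *: (w_linf delta Phip Phiq *m (Yp - Phip *m breg))
    = colavg Phiq *m beta_linf delta Phip Phiq Yp breg.
Proof.
move=> breg.
have hunit : Phip^T *m Phip \in unitmx.
  rewrite unitmxE hdiag det_diag unitfE; apply/prodf_neq0 => i _.
  by rewrite gt_eqF.
have hinv : invmx (Phip^T *m Phip) *m Phip^T *m Phip = 1%:M.
  by rewrite -mulmxA mulVmx.
case: n Phip Phiq Yp hbarp hdiag hunit hinv => [|n] Phip Phiq Yp hbarp hdiag hunit hinv.
  have -> : colavg Phiq = 0 by rewrite /colavg invr0 scale0r.
  by rewrite invr0 scale0r !mul0mx addr0.
rewrite /w_linf -scalemxAl scalerA mulVf ?pnatr_eq0 // scale1r.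
rewrite /beta_linf hbarp subr0.
set q := colavg Phiq.
set T := soft_thr_row delta q.
rewrite mulmxBr !mulmxA.
have hT : T *m invmx (Phip^T *m Phip) *m Phip^T *m Phip = T.
  by rewrite -!mulmxA mulVmx // mulmx1.
rewrite hT.
rewrite -(mulmxA T (invmx _)) -(mulmxA T) -/(beta_ols Phip Yp).
apply/rowP => i; rewrite !mxE ord1.
rewrite addrA -big_split -sumrB /=; apply: eq_bigr => j _.
rewrite !mxE; exact: pointwise.
Qed.
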